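(* Let $k$ be a field and let $\nu$ be the valuation on $k[x,y]$ given by $\nu(p)=\operatorname{ord}_t\, p\!\left(t,\sum_{i=1}^\infty t^{i^2}\right)$, the $t$-adic order of the power series obtained by substituting $x\mapsto t$, $y\mapsto t+t^4+t^9+t^{16}+\cdots$. Then $\nu$ is centered on $k[x,y]$, the set $\mathbf{Q}=\{x\}$ satisfies (GS3), but $\mathbf{Q}=\{x\}$ does not satisfy (GS2). In particular, the converse of the implication (GS2) $\Rightarrow$ (GS3) fails in general.
   Context: The substitution homomorphism $k[x,y]\to k[[t]]$, $x\mapsto t$, $y\mapsto\sum_{i\ge1}t^{i^2}$, is injective (the series is transcendental over $k(t)$), so $\nu$ is a valuation with $\nu(k^\times)=0$ and $\nu(t)=1$. For a valuation $\nu$ on a ring $R$ with values in $\Gamma\cup\{\infty\}$: $\nu(R)$ is its set of finite values; for $\gamma\in\nu(R)$, $\mathcal P_\gamma=\{f\mid\nu(f)\ge\gamma\}$, $\mathcal P_\gamma^+=\{f\mid\nu(f)>\gamma\}$; $\mathrm{gr}_\nu(R)=\bigoplus_{\gamma}\mathcal P_\gamma/\mathcal P_\gamma^+$ with multiplication induced by that of $R$; $\mathrm{in}_\nu(f)$ is the image of $f$ in $\mathcal P_{\nu(f)}/\mathcal P_{\nu(f)}^+$. $\nu$ is centered if $\nu\ge0$ on $R$; then $\mathfrak m=\{\nu>0\}$ and $\mathrm{gr}_\nu(R)$ is an $R/\mathfrak m$-algebra. For $\mathbf{Q}\subseteq R$, $\mathbf{Q}^\lambda=\prod Q^{\lambda(Q)}$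 for finitely supported $\lambda:\mathbf{Q}\to\mathbb{N}_0$. (GS2): for every $\gamma\in\nu(R)$ the ideal $\mathcal P_\gamma$ is generated by $\{\mathbf{Q}^\lambda\mid\nu(\mathbf{Q}^\lambda)\ge\gamma\}$. (GS3): $\{\mathrm{in}_\nu(Q)\mid Q\in\mathbf{Q}\}$ generates $\mathrm{gr}_\nu(R)$ as an $R/\mathfrak m$-algebra. *)

(* Defs.v *)
From HB Require Import structures.
From mathcomp Require Import all_boot all_order all_algebra.
From mathcomp Require Import mpoly.
From Stdlib Require Import ClassicalEpsilon.
Set Implicit Arguments. Unset Strict Implicit. Unset Printing Implicit Defensive.
Import Order.TTheory GRing.Theory Num.Theory.
Local Open Scope ring_scope.

(* ---------- Generic notions for a valuation v : R -> Gamma u {oo} ----------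
   Gamma = int, and the value oo is represented by None. *)
Section Generic.
Variable R : comNzRingType.
Variable v : R -> option int.

Definition val_ge (x : R) (g : int) : bool :=
  if v x is Some a then g <= a else true.
Definition val_gt (x : R) (g : int) : bool :=
  if v x is Some a then g < a else true.
Definition in_val_set (g : int) : Prop := exists x, v x = Some g.
Definition centered : Prop := forall x, val_ge x 0.
(* Q^lambda for a finitely supported lambda, written as the product of a
   finite list of elements of Q (with repetitions). *)
Definition mono (l : seq R) : R := \prod_(q <- l) q.

(* (GS2): for every g in nu(R), P_g is the ideal generated by
   { Q^lambda | nu(Q^lambda) >= g }. *)
Definition GS2 (Q : pred R) : Prop :=
  forall g, in_val_set g -> forall f : R,
    val_ge f g <->
    exists s : seq (R * seq R),
      all (fun c => all Q c.2 && val_ge (mono c.2) g) s /\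
      f = \sum_(c <- s) c.1 * mono c.2.

(* (GS3): { in_nu(Q) | Q in Q } generates gr_nu(R) as an R/m-algebra,
   written out componentwise: every homogeneous element of degree g,
   i.e. the class of some f \in P_g in P_g/P_g^+, is an R/m-linear
   combination of products of initial forms in_nu(Q^lambda) of degree g,
   i.e. f - sum a_i Q^lambda_i \in P_g^+. *)
Definition GS3 (Q : pred R) : Prop :=
  forall g, in_val_set g -> forall f : R,
    val_ge f g ->
    exists s : seq (R * seq R),
      all (fun c => all Q c.2 && (v (mono c.2) == Some g)) s /\
      val_gt (f - \sum_(c <- s) c.1 * mono c.2) g.
End Generic.

Section Nu.
Variable k : fieldType.

Definition sN (n : nat) : {poly k} := \sum_(1 <= i < n.+1) 'X^(i ^ 2).

(* n-th coefficient of the power series p(t, s(t)); since s = s_n mod t^(n+1),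
   it equals the n-th coefficient of the polynomial p(t, s_n(t)). *)
Definition subst_coef (p : {mpoly k[2]}) (n : nat) : k :=
  (mmap (fun c : k => c%:P) (fun i : 'I_2 => if val i == 0%N then 'X else sN n) p)`_n.

Definition ord_t (c : nat -> k) : option nat :=
  match excluded_middle_informative (exists n, c n != 0) with
  | left H => Some (@ex_minn (fun n => c n != 0) H)
  | right _ => None
  end.

Definition nu (p : {mpoly k[2]}) : option int :=
  omap (fun n : nat => n%:Z) (ord_t (subst_coef p)).
End Nu.

(* Main.v *)
Require Import Defs.
From HB Require Import structures.
From mathcomp Require Import all_boot all_order all_algebra.
From mathcomp Require Import mpoly.
From Stdlib Require Import ClassicalEpsilon.
Set Implicit Arguments. Unset Strict Implicit. Unset Printing Implicit Defensive.
Import Order.TTheory GRing.Theory Num.Theory.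
Local Open Scope ring_scope.

Section S.
Variable k : fieldType.

Definition hh (n : nat) : 'I_2 -> {poly k} := fun i => if val i == 0%N then 'X else sN k n.
Definition SS (n : nat) (p : {mpoly k[2]}) : {poly k} := mmap (fun c : k => c%:P) (hh n) p.

Lemma subst_coefE p n : subst_coef p n = (SS n p)`_n.
Proof. by []. Qed.

Lemma SSM n p q : SS n (p * q) = SS n p * SS n q.
Proof. exact: (@mmap_is_multiplicative 2 k {poly k} (hh n) (@polyC k)).1. Qed.

Lemma SSB n p q : SS n (p - q) = SS n p - SS n q.
Proof. by rewrite /SS mmapB. Qed.

Lemma SSC n c : SS n c%:MP = c%:P.
Proof. by rewrite /SS mmapC. Qed.

Lemma SSX n (i : 'I_2) : SS n 'X_i = hh n i.
Proof. by rewrite /SS mmapX mmap1U. Qed.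

Lemma SSXn n m : SS n ('X_0 ^+ m) = 'X^m.
Proof. elim: m => [|m IH]; first by rewrite !expr0 -mpolyC1 SSC.
by rewrite !exprS SSM IH SSX. Qed.

Lemma ord_t_some (c : nat -> k) m : ord_t c = Some m -> c m != 0 /\ forall n, (n < m)%N -> c n = 0.
Proof.
rewrite /ord_t; case: excluded_middle_informative => // H [<-].
case: ex_minnP => j Hj Hmin; split => // n Hn; apply/eqP; apply: contraTT Hn => Hc.
by rewrite -leqNgt; apply: Hmin.
Qed.

Lemma ord_t_none (c : nat -> k) : ord_t c = None -> forall n, c n = 0.
Proof.
rewrite /ord_t; case: excluded_middle_informative => // H _ n.
by apply/eqP/negPn/negP => Hn; apply: H; exists n.
Qed.

Lemma ord_t_eq (c : nat -> k) m : c m != 0 -> (forall n, (n < m)%N -> c n = 0) -> ord_t c = Some m.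
Proof.
move=> Hm Hl; case E: (ord_t c) => [j|]; last by rewrite (ord_t_none E) eqxx in Hm.
have [Hj Hjl] := ord_t_some E; congr Some; apply/eqP; rewrite eqn_leq.
apply/andP; split; rewrite leqNgt; apply/negP => H.
  by rewrite Hjl ?eqxx in Hm.
by rewrite Hl ?eqxx in Hj.
Qed.

Lemma val_ge_nu p m : val_ge (@nu k) p (Posz m) <-> forall n, (n < m)%N -> subst_coef p n = 0.
Proof.
rewrite /val_ge /nu; case E: (ord_t _) => [j|] /=; last first.
  by split => // _ n _; apply: ord_t_none.
have [Hj Hl] := ord_t_some E; rewrite lez_nat; split.
  by move=> Hmj n Hn; apply: Hl; apply: leq_trans Hmj.
move=> H; rewrite leqNgt; apply/negP => Hjm.
by rewrite H ?eqxx in Hj.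
Qed.

Lemma val_gt_nu p m : val_gt (@nu k) p (Posz m) <-> forall n, (n <= m)%N -> subst_coef p n = 0.
Proof.
rewrite /val_gt /nu; case E: (ord_t _) => [j|] /=; last first.
  by split => // _ n _; apply: ord_t_none.
have [Hj Hl] := ord_t_some E; rewrite ltz_nat; split.
  by move=> Hmj n Hn; apply: Hl; apply: leq_ltn_trans Hmj.
move=> H; rewrite ltnNge; apply/negP => Hjm.
by rewrite H ?eqxx in Hj.
Qed.

Lemma nu_Xn m : @nu k ('X_0 ^+ m) = Some (Posz m).
Proof.
rewrite /nu (@ord_t_eq _ m) //.
  by rewrite subst_coefE SSXn coefXn eqxx oner_neq0.
by move=> n Hn; rewrite subst_coefE SSXn coefXn (ltn_eqF Hn).
Qed.

Lemma mono_X0 (l : seq {mpoly k[2]}) : all (pred1 'X_0) l -> mono l = 'X_0 ^+ size l.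
Proof.
rewrite /mono; elim: l => [|a l IH]; first by rewrite big_nil expr0.
by rewrite /= => /andP[/eqP -> Hl]; rewrite big_cons IH // exprS.
Qed.

End S.

Theorem mainTheorem2 (k : fieldType) :
  centered (@nu k) /\
  GS3 (@nu k) (pred1 ('X_0 : {mpoly k[2]})) /\
  ~ GS2 (@nu k) (pred1 ('X_0 : {mpoly k[2]})).
Proof.
split; first by move=> x; apply/(val_ge_nu x 0).
split.
  move=> g [x Hx] f Hf.
  have [m Hg] : exists m : nat, g = Posz m.
    by move: Hx; rewrite /nu; case: (ord_t _) => //= j [<-]; exists j.
  subst g.
  have Hf' := proj1 (val_ge_nu f m) Hf.
  exists [:: ((subst_coef f m)%:MP, nseq m 'X_0)]; split.
    rewrite /= andbT; apply/andP; split.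
      by elim: (m) => //= j ->; rewrite eqxx.
    have Hm : all (pred1 ('X_0 : {mpoly k[2]})) (nseq m 'X_0) by elim: (m) => //= j ->; rewrite eqxx.
    by rewrite mono_X0 // size_nseq nu_Xn.
  apply/val_gt_nu => n Hn.
  rewrite big_cons big_nil addr0 /= mono_X0; last by elim: (m) => //= j ->; rewrite eqxx.
  rewrite size_nseq subst_coefE SSB SSM SSC SSXn coefB coefCM coefXn -subst_coefE.
  move: Hn; rewrite leq_eqVlt => /orP [/eqP ->|Hn].
    by rewrite eqxx mulr1 subrr.
  by rewrite Hf' // (ltn_eqF Hn) mulr0 subr0.
move=> H.
have [s [Hs E]] : exists s : seq ({mpoly k[2]} * seq {mpoly k[2]}),
    all (fun c => all (pred1 'X_0) c.2 && val_ge (@nu k) (mono c.2) 1) s /\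
    'X_1 = \sum_(c <- s) c.1 * mono c.2.
  apply/(H 1); first by exists ('X_0 ^+ 1); rewrite nu_Xn.
  apply/(val_ge_nu _ 1) => n; rewrite ltnS leqn0 => /eqP ->.
  rewrite subst_coefE SSX /hh /= /sN big_geq // coef0 //.
pose v : 'I_2 -> k := fun i => if val i == 0%N then 0 else 1.
have := congr1 (meval v) E.
rewrite mevalXU /v /= (big_morph (meval v) (@mevalD _ _ v) (meval0 _)).
rewrite big1_seq; first by move/eqP; rewrite oner_eq0.
move=> c /(allP Hs) /andP [Hq Hge].
rewrite mevalM mono_X0 // rmorphXn /= mevalXU /v /= expr0n.
rewrite mono_X0 // in Hge; move: Hge.
case: (size c.2) => [|j] //=; last by rewrite mulr0.
move=> /(val_ge_nu _ 1) /(_ 0%N isT).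
by rewrite subst_coefE SSXn coefXn /= => /eqP; rewrite oner_eq0.
Qed.
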